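(* Let $Q$ be a probability distribution over functions $g:\mathcal X\to\mathbb R$, and fix an integer $k\ge 1$. Let $G=\{g_1,\dots,g_k\}\sim Q^k$ and $G'=\{g'_1,\dots,g'_k\}\sim Q^k$ be independent (each consisting of $k$ i.i.d. draws from $Q$). Define \[ f_1=\arg\min_{f\in V(G)}\mathrm{MSE}(f),\qquad f_2=\arg\min_{f\in V(G')}\mathrm{MSE}(f). \] Then \[ \mathbb E_{f_1,f_2}\big[D(f_1,f_2)\big]\le 4\big(\bar R_k-\bar R_{2k}\big). \]
   Context: $P$ is a probability distribution on $\mathcal X\times\mathcal Y$ with $\mathcal X\subseteq\mathbb R^m$ and $\mathcal Y\subseteq\mathbb R$; unless stated otherwise, expectations are over $(x,y)\sim P$ (or its $x$-marginal), and all functions are assumed square-integrable. For $f:\mathcal X\to\mathbb R$, $\mathrm{MSE}(f)=\mathbb E[(y-f(x))^2]$. The disagreement of two functions is $D(f_1,f_2)=\mathbb E[(f_1(x)-f_2(x))^2]$. For a finite multiset $G$ of functions $\mathcal X\to\mathbb R$, $V(G)$ denotes their linear span and $R(G)=\min_{f\in V(G)}\mathrm{MSE}(f)$. For $t\in\mathbb N$, $\bar R_t=\mathbb E_{\{g_1,\dots,g_t\}\sim Q^t}[R(\{g_1,\dots,g_t\})]$, the expectation over $t$ i.i.d. draws from $Q$. In the conclusion, the outer expectation is over the random draws of $G$ and $G'$. *)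

(* Defs.v *)
From HB Require Import structures.
From mathcomp Require Import all_boot all_order all_algebra.
From mathcomp Require Import all_classical all_reals all_analysis.
Set Implicit Arguments. Unset Strict Implicit. Unset Printing Implicit Defensive.
Import Order.TTheory GRing.Theory Num.Theory.
Local Open Scope classical_set_scope.
Local Open Scope ring_scope.

Section Defs.
Context {dX : measure_display} {X : measurableType dX} {R : realType}.

Definition MSE (P : probability (X * R)%type R) (f : X -> R) : \bar R :=
  (\int[P]_z ((z.2 - f z.1) ^+ 2)%:E)%E.

(* D(f1,f2) = E_{x ~ P_X}[(f1 x - f2 x)^2], written as an integral over P
   of a function of the x-coordinate only. *)
Definition Dis (P : probability (X * R)%type R) (f1 f2 : X -> R) : \bar R :=
  (\int[P]_z ((f1 z.1 - f2 z.1) ^+ 2)%:E)%E.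

Definition lspan (G : seq (X -> R)) : set (X -> R) :=
  [set f | exists c : nat -> R,
     f = fun x => \sum_(i < size G) c i * nth (fun=> 0) G i x].

(* R(G) = min_{f in V(G)} MSE(f)  (the minimum is attained; we write it as the infimum) *)
Definition Rmin (P : probability (X * R)%type R) (G : seq (X -> R)) : \bar R :=
  ereal_inf [set MSE P f | f in lspan G].

End Defs.

Section Iter.
Context {dT : measure_display} {Theta : measurableType dT} {R : realType}.

(* Expectation over t i.i.d. draws from Q, i.e. E_{(th_1..th_t) ~ Q^t}[F],
   defined as the iterated (Tonelli) integral
   \int Q(dth_1) ... \int Q(dth_t) F [:: th_1; ...; th_t]. *)
Fixpoint iterE (Q : probability Theta R) (t : nat) (F : seq Theta -> \bar R) : \bar R :=
  match t with
  | 0 => F [::]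
  | t'.+1 => (\int[Q]_th iterE Q t' (fun s => F (th :: s)))%E
  end.
End Iter.

(* \bar R_t = E_{G ~ Q^t}[R(G)], where the random functions are g th, th ~ Q *)
Definition Rbar {dX dT : measure_display} {X : measurableType dX}
  {Theta : measurableType dT} {R : realType}
  (P : probability (X * R)%type R) (Q : probability Theta R)
  (g : Theta -> X -> R) (t : nat) : \bar R :=
  iterE Q t (fun s => Rmin P (map g s)).

(* Main.v *)
Require Import Defs.
From HB Require Import structures.
From mathcomp Require Import all_boot all_order all_algebra.
From mathcomp Require Import all_classical all_reals all_analysis.
From mathcomp Require Import measurable_realfun.
From mathcomp Require Import ring lra.
Import Order.TTheory GRing.Theory Num.Theory.
Local Open Scope classical_set_scope.
Local Open Scope ring_scope.

Lemma minmax_id (R : realDomainType) (x c : R) : x = Num.min x c + Num.max (x - c) 0.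
Proof.
case: (leP x c) => hc.
  rewrite (max_r _) ?addr0// subr_le0//.
rewrite (max_l _) ?subr_ge0 ?(ltW hc)// addrC subrK//.
Qed.

Section lower.
Local Open Scope ereal_scope.
Context d (T : measurableType d) (R : realType) (mu : probability T R).
Import HBNNSimple.

Lemma sup_add_le (A B : set (\bar R)) s : A 0 -> B 0 ->
  (forall a, A a -> 0 <= a) -> (forall b, B b -> 0 <= b) ->
  (forall a b, A a -> B b -> a + b <= s) -> ereal_sup A + ereal_sup B <= s.
Proof.
move=> A0 B0 Ap Bp AB; case: s AB => [r| |] AB; last 2 first.
- by rewrite leey.
- by have := AB _ _ A0 B0; rewrite adde0.
have Bf : ereal_sup B \is a fin_num.
  rewrite ge0_fin_numE; last exact: ereal_sup_ubound.
  apply: (@le_lt_trans _ _ r%:E); last exact: ltry.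
  apply: ge_ereal_sup => b Bb; have := AB _ _ A0 Bb; by rewrite add0e.
rewrite -leeBrDr //; apply: ge_ereal_sup => a Aa.
have af : a \is a fin_num.
  rewrite ge0_fin_numE ?Ap//; apply: (@le_lt_trans _ _ r%:E); last exact: ltry.
  by have := AB _ _ Aa B0; rewrite adde0.
rewrite leeBrDl // -leeBrDr //.
apply: ge_ereal_sup => b Bb; rewrite leeBrDl //; exact: AB.
Qed.

Lemma L1 (F G : T -> \bar R) : (forall x, 0 <= F x) -> (forall x, F x <= G x) ->
  \int[mu]_x F x <= \int[mu]_x G x.
Proof.
move=> F0 FG; have G0 x : 0 <= G x by apply: le_trans (FG x).
rewrite !ge0_integralTE//; apply: ereal_sup_le => _ [h hF <-].
by exists h => //= x; apply: le_trans (hF x) (FG x).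
Qed.

Lemma L2 (F G : T -> \bar R) : (forall x, 0 <= F x) -> (forall x, 0 <= G x) ->
  \int[mu]_x F x + \int[mu]_x G x <= \int[mu]_x (F x + G x).
Proof.
move=> F0 G0; rewrite !ge0_integralTE//; last by move=> x; rewrite adde_ge0.
apply: sup_add_le.
- by exists nnsfun0 => //=; exact: sintegral0.
- by exists nnsfun0 => //=; exact: sintegral0.
- by move=> _ [h _ <-]; exact: sintegral_ge0.
- by move=> _ [h _ <-]; exact: sintegral_ge0.
move=> _ _ [h1 h1F <-] [h2 h2G <-]; rewrite -sintegralD.
apply: ereal_sup_ubound; exists (add_nnsfun h1 h2) => //= x.
by rewrite EFinD; apply: leeD.
Qed.

Lemma sint_int (h : {nnsfun T >-> R}) : sintegral mu h = \int[mu]_x (h x)%:E.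
Proof. by rewrite integral_nnsfun// patch_setT. Qed.

Lemma L3 (F : T -> \bar R) (c : R) : (0 <= c)%R -> (forall x, 0 <= F x) ->
  \int[mu]_x (c%:E + F x) <= c%:E + \int[mu]_x F x.
Proof.
move=> c0 F0; rewrite [X in X <= _]ge0_integralTE; last by move=> x; rewrite adde_ge0.
apply: ge_ereal_sup => _ [h hF <-]; rewrite sint_int.
have hm : measurable_fun setT (h : T -> R) by exact: measurable_funP.
have -> : \int[mu]_x (h x)%:E =
    \int[mu]_x ((Num.min (h x) c)%:E + (Num.max (h x - c) 0)%:E).
  by apply: eq_integral => x _; rewrite -EFinD -minmax_id.
rewrite ge0_integralD//; last 4 first.
- by move=> x _; rewrite lee_fin le_min c0 andbT fun_ge0.
- apply/measurable_EFinP; exact: measurable_minr.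
- by move=> x _; rewrite lee_fin le_max lexx orbT.
- apply/measurable_EFinP; apply: measurable_maxr => //.
  exact: measurable_funB.
apply: leeD.
  apply: (@le_trans _ _ (\int[mu]_x (cst c%:E) x)).
    by apply: L1 => x; rewrite ?lee_fin ?le_min ?c0 ?andbT ?fun_ge0// ge_min lexx orbT.
  rewrite integral_cst//. have -> : (c%:E * mu [set: T] = c%:E)%E by rewrite probability_setT mule1. by [].
apply: L1 => x; first by rewrite lee_fin le_max lexx orbT.
case: (leP (h x - c)%R 0%R) => hc; first exact: F0.
rewrite EFinB leeBlDl//; exact: hF.
Qed.

Lemma L4 (F : T -> \bar R) (c : R) : (0 < c)%R -> (forall x, 0 <= F x) ->
  \int[mu]_x (c%:E * F x) <= c%:E * \int[mu]_x F x.
Proof.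
move=> c0 F0; rewrite [X in X <= _]ge0_integralTE; last by move=> x; rewrite mule_ge0// lee_fin ltW.
apply: ge_ereal_sup => _ [h hF <-]; rewrite sint_int.
have hm : measurable_fun setT (h : T -> R) by exact: measurable_funP.
have -> : \int[mu]_x (h x)%:E = \int[mu]_x (c%:E * (h x / c)%:E).
  apply: eq_integral => x _; rewrite -EFinM; congr EFin.
  by rewrite mulrC divfK// gt_eqF.
rewrite ge0_integralZl//; last 3 first.
- apply/measurable_EFinP; apply: measurable_funM => //; exact: measurable_cst.
- by move=> x _; rewrite lee_fin divr_ge0// ltW.
- by rewrite lee_fin ltW.
apply: lee_wpmul2l; first by rewrite lee_fin ltW.
apply: L1 => x; first by rewrite lee_fin divr_ge0// ltW.
have -> : F x = (c^-1)%:E * (c%:E * F x).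
  by rewrite muleA -EFinM mulVf ?gt_eqF// mul1e.
rewrite mulrC EFinM; apply: lee_wpmul2l; first by rewrite lee_fin invr_ge0 ltW.
exact: hF.
Qed.

End lower.

Section iter.
Local Open Scope ereal_scope.
Context d (T : measurableType d) (R : realType) (Q : probability T R).

Lemma iterS t F : iterE Q t.+1 F = \int[Q]_th iterE Q t (fun s => F (th :: s)).
Proof. by []. Qed.

Lemma I0 t (F : seq T -> \bar R) : (forall s, 0 <= F s) -> 0 <= iterE Q t F.
Proof.
elim: t F => [|t IH] F F0 //=; apply: integral_ge0 => th _; exact: IH.
Qed.

Lemma I1 t (F G : seq T -> \bar R) : (forall s, 0 <= F s) ->
  (forall s, size s = t -> F s <= G s) -> iterE Q t F <= iterE Q t G.
Proof.
elim: t F G => [|t IH] F G F0 FG /=; first exact: FG.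
apply: L1 => [th|th]; first exact: I0.
apply: IH => // s hs; apply: FG => /=; by rewrite hs.
Qed.

Lemma I2 t (F G : seq T -> \bar R) : (forall s, 0 <= F s) -> (forall s, 0 <= G s) ->
  iterE Q t F + iterE Q t G <= iterE Q t (fun s => F s + G s).
Proof.
elim: t F G => [|t IH] F G F0 G0 //=.
apply: le_trans; first by apply: L2 => th; exact: I0.
apply: L1 => th; first by rewrite adde_ge0 ?I0.
exact: IH.
Qed.

Lemma I3 t (F : seq T -> \bar R) (c : R) : (0 <= c)%R -> (forall s, 0 <= F s) ->
  iterE Q t (fun s => c%:E + F s) <= c%:E + iterE Q t F.
Proof.
elim: t F => [|t IH] F c0 F0 //=.
apply: le_trans; last by apply: L3 => // th; exact: I0.
apply: L1 => th; first by apply: I0 => s; rewrite adde_ge0.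
exact: IH.
Qed.

Lemma I4 t (F : seq T -> \bar R) (c : R) : (0 < c)%R -> (forall s, 0 <= F s) ->
  iterE Q t (fun s => c%:E * F s) <= c%:E * iterE Q t F.
Proof.
elim: t F => [|t IH] F c0 F0 //=.
apply: le_trans; last by apply: L4 => // th; exact: I0.
apply: L1 => th; first by apply: I0 => s; rewrite mule_ge0// lee_fin ltW.
exact: IH.
Qed.

Lemma I4' t (F : seq T -> \bar R) (c : R) : (0 < c)%R -> (forall s, 0 <= F s) ->
  c%:E * iterE Q t F <= iterE Q t (fun s => c%:E * F s).
Proof.
move=> c0 F0.
have -> : iterE Q t F = iterE Q t (fun s => (c^-1)%:E * (c%:E * F s)).
  congr iterE; apply/funext => s.
  by rewrite muleA -EFinM mulVf ?gt_eqF// mul1e.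
apply: le_trans; first apply: lee_wpmul2l; first by rewrite lee_fin ltW.
  apply: I4; first by rewrite invr_gt0.
  by move=> s; rewrite mule_ge0// lee_fin ltW.
by rewrite muleA -EFinM divff ?gt_eqF// mul1e.
Qed.

Lemma Icst t (x : \bar R) : iterE Q t (fun _ => x) = x.
Proof.
elim: t => [|t IH] //=; rewrite IH integral_cst//.
have -> : (x * Q [set: T] = x)%E by rewrite probability_setT mule1.
by [].
Qed.

Lemma Isplit a b (F : seq T -> \bar R) :
  iterE Q (a + b) F = iterE Q a (fun s => iterE Q b (fun s' => F (s ++ s'))).
Proof.
elim: a F => [|a IH] F //=.
congr integral; apply/funext => th.
by rewrite IH.
Qed.

End iter.

Lemma id4 (R : realFieldType) (y a b : R) :
  (a - b) ^+ 2 + 4 * (y - (a + b) / 2) ^+ 2 = 2 * (y - a) ^+ 2 + 2 * (y - b) ^+ 2.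
Proof. by field. Qed.

Section main.
Local Open Scope ereal_scope.
Context (dX : measure_display) (X : measurableType dX) (R : realType)
  (P : probability (X * R)%type R)
  (dT : measure_display) (Theta : measurableType dT)
  (g : Theta -> X -> R)
  (g_meas : measurable_fun setT (fun p : Theta * X => g p.1 p.2)).

Lemma meas_g th : measurable_fun setT (g th).
Proof. exact: (measurableT_comp g_meas (pair1_measurable th)). Qed.

Lemma meas_nth s i : measurable_fun setT (nth (fun=> 0%R) (map g s) i).
Proof.
elim: s i => [|th s IH] [|i] //=; exact: meas_g.
Qed.

Lemma meas_lspan s h : lspan (map g s) h -> measurable_fun setT h.
Proof.
move=> [c ->]; apply: measurable_sum => i.
apply: measurable_funM; [exact: measurable_cst | exact: meas_nth].
Qed.

Lemma meas_sq (u v : X * R -> R) : measurable_fun setT u -> measurable_fun setT v ->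
  measurable_fun setT (fun z => ((u z - v z) ^+ 2)%:E).
Proof.
move=> mu mv; apply/measurable_EFinP; apply: measurable_funX.
exact: measurable_funB.
Qed.

Lemma meas_fst (u : X -> R) : measurable_fun setT u ->
  measurable_fun setT (fun z : X * R => u z.1).
Proof. move=> mu; exact: (measurableT_comp mu measurable_fst). Qed.

Lemma meas_msq (u : X -> R) : measurable_fun setT u ->
  measurable_fun setT (fun z : X * R => ((z.2 - u z.1) ^+ 2)%:E).
Proof. move=> mu; exact: (meas_sq (fun z : X * R => z.2) (fun z : X * R => u z.1) measurable_snd (meas_fst _ mu)). Qed.

Lemma meas_dsq (u v : X -> R) : measurable_fun setT u -> measurable_fun setT v ->
  measurable_fun setT (fun z : X * R => ((u z.1 - v z.1) ^+ 2)%:E).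
Proof. move=> mu mv; apply: (meas_sq (fun z : X * R => u z.1) (fun z : X * R => v z.1)); exact: meas_fst. Qed.

Lemma Rmin_ge0 G : 0 <= Rmin P G.
Proof.
apply: le_ereal_inf_tmp => _ [h _ <-]; apply: integral_ge0 => z _.
by rewrite lee_fin sqr_ge0.
Qed.

Lemma Rmin_le0 G : Rmin P G <= \int[P]_z ((z.2) ^+ 2)%:E.
Proof.
have -> : \int[P]_z ((z.2) ^+ 2)%:E = MSE P (fun=> 0%R).
  by rewrite /MSE; apply: eq_integral => z _; rewrite subr0.
apply: ereal_inf_lbound; exists (fun=> 0%R) => //.
exists (fun=> 0%R); apply/funext => x; rewrite big1 // => i _; exact: mul0r.
Qed.

Lemma Dis_ge0 a b : 0 <= Dis P a b.
Proof. apply: integral_ge0 => z _; by rewrite lee_fin sqr_ge0. Qed.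

Lemma lspan_mid s s' a b : lspan (map g s) a -> lspan (map g s') b ->
  size s = size s' ->
  lspan (map g (s ++ s')) (fun x => (a x + b x) / 2)%R.
Proof.
move=> [ca ->] [cb ->] ss'.
set k := size s.
exists (fun i => if (i < k)%N then ca i / 2 else cb (i - k)%N / 2)%R.
apply/funext => x /=.
rewrite map_cat size_cat !size_map -/k -ss' big_split_ord /=.
rewrite mulrDl !mulr_suml; congr (_ + _)%R; apply: eq_bigr => i _.
  rewrite ltn_ord nth_cat size_map -/k ltn_ord.
  by rewrite mulrAC.
rewrite ltnNge leq_addr /= nth_cat size_map -/k ltnNge leq_addr /= addKn.
by rewrite mulrAC.
Qed.

Lemma key s s' a b : lspan (map g s) a -> lspan (map g s') b ->
  size s = size s' ->
  Dis P a b + 4%:E * Rmin P (map g (s ++ s')) <= 2%:E * MSE P a + 2%:E * MSE P b.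
Proof.
move=> la lb ss'.
have ma := meas_lspan _ _ la; have mb := meas_lspan _ _ lb.
have lm := lspan_mid _ _ _ _ la lb ss'.
have mm := meas_lspan _ _ lm.
apply: (@le_trans _ _ (Dis P a b + 4%:E * MSE P (fun x => (a x + b x) / 2)%R)).
  apply: leeD2l; apply: lee_wpmul2l => //.
  by apply: ereal_inf_lbound; exists (fun x => (a x + b x) / 2)%R.
have sq0 (u v : X * R -> R) : forall z, [set: X * R] z -> 0 <= ((u z - v z) ^+ 2)%:E.
  by move=> z _; rewrite lee_fin sqr_ge0.
rewrite /Dis /MSE.
rewrite -ge0_integralZl//; last 2 first.
- exact: meas_msq mm.
- exact: (sq0 (fun z => z.2) (fun z => (a z.1 + b z.1) / 2)%R).
rewrite -ge0_integralZl//; last 2 first.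
- exact: meas_msq ma.
- exact: (sq0 (fun z => z.2) (fun z => a z.1)).
rewrite -ge0_integralZl//; last 2 first.
- exact: meas_msq mb.
- exact: (sq0 (fun z => z.2) (fun z => b z.1)).
rewrite -ge0_integralD//; last 4 first.
- exact: (sq0 (fun z => a z.1) (fun z => b z.1)).
- exact: meas_dsq ma mb.
- by move=> z _; rewrite mule_ge0// lee_fin sqr_ge0.
- apply: emeasurable_funM; first exact: measurable_cst.
  exact: meas_msq mm.
rewrite -ge0_integralD//; last 4 first.
- by move=> z _; rewrite mule_ge0// lee_fin sqr_ge0.
- apply: emeasurable_funM; first exact: measurable_cst.
  exact: meas_msq ma.
- by move=> z _; rewrite mule_ge0// lee_fin sqr_ge0.
- apply: emeasurable_funM; first exact: measurable_cst.
  exact: meas_msq mb.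
rewrite le_eqVlt; apply/orP; left; apply/eqP.
apply: eq_integral => z _.
by rewrite -!EFinM -!EFinD id4.
Qed.

End main.

Ltac pos := repeat (first [ done | progress intros | apply: adde_ge0 | apply: mule_ge0 | apply: I0 | match goal with H : _ |- _ => exact: H end | by rewrite lee_fin ]).

Theorem theorem1
  (dX : measure_display) (X : measurableType dX) (R : realType)
  (P : probability (X * R)%type R)
  (dT : measure_display) (Theta : measurableType dT)
  (Q : probability Theta R) (g : Theta -> X -> R)
  (g_meas : measurable_fun setT (fun p : Theta * X => g p.1 p.2))
  (y_sq : (\int[P]_z ((z.2) ^+ 2)%:E < +oo)%E)
  (g_sq : forall th, (\int[P]_z ((g th z.1) ^+ 2)%:E < +oo)%E)
  (k : nat) (hk : (1 <= k)%N)
  (f : seq Theta -> X -> R)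
  (f_min : forall s : seq Theta, size s = k ->
     lspan (map g s) (f s) /\ MSE P (f s) = Rmin P (map g s)) :
  (iterE Q k (fun s => iterE Q k (fun s' => Dis P (f s) (f s')))
   <= 4%:E * (Rbar P Q g k - Rbar P Q g (2 * k)%N))%E.
Proof.
Local Open Scope ereal_scope.
set M := \int[P]_z ((z.2) ^+ 2)%:E.
have M0 : 0 <= M by apply: integral_ge0 => z _; rewrite lee_fin sqr_ge0.
have Mf : M \is a fin_num by rewrite ge0_fin_numE.
set A := fun s => Rmin P (map g s).
have A0 s : 0 <= A s by exact: Rmin_ge0.
have AM s : A s <= M by exact: Rmin_le0.
have Af s : A s \is a fin_num.
  by rewrite ge0_fin_numE// (le_lt_trans (AM s))// ltey_eq Mf.
set IA := iterE Q k A.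
set C := fun s s' => A (s ++ s').
set IC := iterE Q k (fun s => iterE Q k (C s)).
set Dd := fun s s' => Dis P (f s) (f s').
set ID := iterE Q k (fun s => iterE Q k (Dd s)).
have D0 s s' : 0 <= Dd s s' by exact: Dis_ge0.
have IA0 : 0 <= IA by exact: I0.
have IAM : IA <= M by rewrite -(@Icst _ _ _ Q k M); apply: I1.
have IAf : IA \is a fin_num by rewrite ge0_fin_numE// (le_lt_trans IAM)// ltey_eq Mf.
have IC0 : 0 <= IC by apply: I0 => s; apply: I0 => s'; exact: A0.
have ICM : IC <= M.
  rewrite -(@Icst _ _ _ Q k M); apply: I1 => [s|s _]; first by pos.
  by rewrite -(@Icst _ _ _ Q k M); apply: I1 => [s'|s' _]; [exact: A0|exact: AM].
have ICf : IC \is a fin_num by rewrite ge0_fin_numE// (le_lt_trans ICM)// ltey_eq Mf.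
have ID0 : 0 <= ID by apply: I0 => s; apply: I0 => s'; exact: D0.
have -> : Rbar P Q g k = IA by [].
have -> : Rbar P Q g (2 * k)%N = IC.
  by rewrite /Rbar mul2n -addnn Isplit /IC /C /A; congr iterE; apply/funext => s;
     congr iterE; apply/funext => s'; rewrite map_cat.
have claim : ID + 4%:E * IC <= 4%:E * IA.
  have step1 : ID + 4%:E * IC <=
      iterE Q k (fun s => iterE Q k (fun s' => Dd s s' + 4%:E * C s s')).
    apply: le_trans; first apply: leeD2l.
      apply: (@le_trans _ _ (iterE Q k (fun s => 4%:E * iterE Q k (C s)))).
        by apply: I4' => //; pos.
      apply: I1 => [s|s _]; first by pos.
      by apply: I4' => //; pos.
    apply: le_trans; first by apply: I2; pos.
    apply: I1 => [s|s _]; first by pos.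
    by apply: I2; pos.
  apply: le_trans; first exact: step1.
  have step2 : iterE Q k (fun s => iterE Q k (fun s' => Dd s s' + 4%:E * C s s')) <=
      iterE Q k (fun s => iterE Q k (fun s' => 2%:E * A s + 2%:E * A s')).
    apply: I1 => [s|s hs]; first by pos.
    apply: I1 => [s'|s' hs']; first by pos.
    have [ls ms] := f_min s hs; have [ls' ms'] := f_min s' hs'.
    rewrite /A -ms -ms' /Dd /C /A; apply: key => //.
    by rewrite hs hs'.
  apply: le_trans; first exact: step2.
  have step3 : iterE Q k (fun s => iterE Q k (fun s' => 2%:E * A s + 2%:E * A s')) <=
      iterE Q k (fun s => 2%:E * A s + 2%:E * IA).
    apply: I1 => [s|s _]; first by pos.
    have -> : 2%:E * A s = (2 * fine (A s))%:E by rewrite EFinM fineK.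
    apply: le_trans; first apply: I3.
    - by rewrite mulr_ge0// fine_ge0.
    - by pos.
    by apply: leeD2l; apply: I4 => //; pos.
  apply: le_trans; first exact: step3.
  have -> : 2%:E * IA = (2 * fine IA)%:E by rewrite EFinM fineK.
  under eq_fun do rewrite addeC.
  apply: le_trans; first apply: I3.
  - by rewrite mulr_ge0// fine_ge0.
  - by pos.
  apply: le_trans; first apply: leeD2l; first by apply: I4 => //; pos.
  rewrite -/IA -(fineK IAf) -!EFinM -EFinD lee_fin.
  lra.
rewrite muleBr//; last by rewrite fin_num_adde_defl// fin_numN.
rewrite leeBrDr//; last by rewrite fin_numM.
Qed.
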